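(* Let $l\in(0,\pi)$, $\alpha>0$, $\delta\ge0$. For $a\in[0,\pi-l]$ let $u_J$ be the solution of the Robin problem with heat source $J=\delta+\chi_{I(a,l)}$. Then $$\max_{a\in[0,\pi-l]}\operatorname{osc}(u_J)=\Theta_\alpha(l,\delta).$$ Moreover, if $\alpha>\alpha_g$, then $\operatorname{osc}(u_J)$, as a function of $a$, increases as $a$ varies from $0$ to $a_0$ and decreases as $a$ varies from $a_0$ to $\pi-l$. If $0<\alpha\le\alpha_g$, then $\operatorname{osc}(u_J)$ increases as $a$ varies from $0$ to $\pi-l$.
   Context: Robin problem: for $\alpha>0$ and $f\in L^1[-\pi,\pi]$, find $u\in C^1[-\pi,\pi]$ with $u'$ absolutely continuous on $[-\pi,\pi]$, $-u''=f$ a.e. on $(-\pi,\pi)$, and $-u'(-\pi)+\alpha u(-\pi)=u'(\pi)+\alpha u(\pi)=0$. It has a unique solution $u_f(x)=\int_{-\pi}^{\pi}G(x,y)f(y)\,dy$, where $G(x,y)=-\tfrac12 c_\alpha xy-\tfrac12|x-y|+\tfrac{1}{2c_\alpha}$ and $c_\alpha=\alpha/(1+\alpha\pi)$. $I(a,l)=[a-l,a+l]$; $\chi_E$ is the characteristic function of $E$; $\operatorname{osc}(u)=\max_{[-\pi,\pi]}u-\min_{[-\pi,\pi]}u$. $a_0=\dfrac{(1+\delta)l}{(1+\alpha\pi)(\delta+2lc_\alpha-l^2c_\alpha^2)}$. If $(1+\delta)l>\delta(\pi-l)$, let $\alpha_0$ be the unique positive root of $$(\pi^2\delta+2\pi l-l^2)\alpha^2+\frac{2(\pi\delta+l)(\pi-l)-\pi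 l(1+\delta)}{\pi-l}\,\alpha+\delta-\frac{(1+\delta)l}{\pi-l}=0,$$ and set $\alpha_g=\alpha_0$. Otherwise set $\alpha_g=0$. $\Theta_\alpha(l,\delta)=\dfrac12\,\dfrac{(1+\delta)l^2}{(\pi^2\delta+2\pi l-l^2)\alpha^2+2(\pi\delta+l)\alpha+\delta}+\pi l+\dfrac{\pi^2\delta}{2}-\dfrac{l^2}{2}$ if $\alpha>\alpha_g$. $\Theta_\alpha(l,\delta)=\dfrac12\,\dfrac{(l^2c_\alpha^2-2lc_\alpha-\delta)(\pi-l)^2}{1+\delta}+\dfrac{l(\pi-l)}{1+\alpha\pi}+\pi l+\dfrac{\pi^2\delta}{2}-\dfrac{l^2}{2}$ if $0<\alpha\le\alpha_g$. *)

(* Defs.v *)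
From Stdlib Require Import Reals.
From Coquelicot Require Import Coquelicot.
Open Scope R_scope.

Definition c_al (al : R) : R := al / (1 + al * PI).

(* Green's function of the Robin problem on [-pi, pi]. *)
Definition G (al x y : R) : R :=
  - (1/2) * c_al al * x * y - (1/2) * Rabs (x - y) + 1 / (2 * c_al al).

(* u_f(x) = int_{-pi}^{pi} G(x,y) f(y) dy : the unique solution of the Robin
   problem with source f (as stated in the paper's context). *)
Definition u_sol (al : R) (f : R -> R) (x : R) : R :=
  RInt (fun y => G al x y * f y) (- PI) PI.

Definition chi_I (a l : R) (y : R) : R :=
  if Rle_dec (a - l) y then (if Rle_dec y (a + l) then 1 else 0) else 0.

Definition J (delta a l : R) (y : R) : R := delta + chi_I a l y.

Definition umax (u : R -> R) : R :=
  real (Lub_Rbar (fun v => exists x, - PI <= x <= PI /\ v = u x)).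
Definition umin (u : R -> R) : R :=
  real (Glb_Rbar (fun v => exists x, - PI <= x <= PI /\ v = u x)).
Definition osc (u : R -> R) : R := umax u - umin u.

Definition a0 (al l delta : R) : R :=
  (1 + delta) * l /
  ((1 + al * PI) * (delta + 2 * l * c_al al - l ^ 2 * (c_al al) ^ 2)).

Definition qA (l delta : R) : R := PI ^ 2 * delta + 2 * PI * l - l ^ 2.
Definition qB (l delta : R) : R :=
  (2 * (PI * delta + l) * (PI - l) - PI * l * (1 + delta)) / (PI - l).
Definition qC (l delta : R) : R := delta - (1 + delta) * l / (PI - l).

(* alpha_g : the positive root of qA a^2 + qB a + qC = 0 when
   (1+delta) l > delta (pi - l) (then qA > 0 > qC, so the positive root is
   unique and given by the quadratic formula); 0 otherwise. *)
Definition alpha_g (l delta : R) : R :=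
  if Rlt_dec (delta * (PI - l)) ((1 + delta) * l)
  then (- qB l delta + sqrt (qB l delta ^ 2 - 4 * qA l delta * qC l delta))
       / (2 * qA l delta)
  else 0.

Definition Theta (al l delta : R) : R :=
  if Rlt_dec (alpha_g l delta) al then
    (1/2) * ((1 + delta) * l ^ 2 /
      ((PI ^ 2 * delta + 2 * PI * l - l ^ 2) * al ^ 2
       + 2 * (PI * delta + l) * al + delta))
    + PI * l + PI ^ 2 * delta / 2 - l ^ 2 / 2
  else
    (1/2) * ((l ^ 2 * (c_al al) ^ 2 - 2 * l * c_al al - delta) * (PI - l) ^ 2
             / (1 + delta))
    + l * (PI - l) / (1 + al * PI)
    + PI * l + PI ^ 2 * delta / 2 - l ^ 2 / 2.

Definition oscJ (al l delta a : R) : R := osc (u_sol al (J delta a l)).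

(* Main.v *)
Require Import Defs.
From Stdlib Require Import Reals Lra Psatz.
From Coquelicot Require Import Coquelicot.
Open Scope R_scope.

Lemma Q_deriv (t : R) : is_derive (fun t => t * Rabs t) t (2 * Rabs t).
Proof.
  apply is_derive_Reals.
  destruct (Rtotal_order t 0) as [H|[H|H]].
  - apply (derivable_pt_lim_locally_ext (fun t => - (t*t)) _ t (t-1) 0).
    + lra.
    + intros z Hz. rewrite Rabs_left; lra.
    + rewrite Rabs_left by lra.
      replace (2 * - t) with (- (2*t)) by ring.
      apply (derivable_pt_lim_opp (fun t => t*t) t (2*t)).
      replace (2*t) with (1*t + t*1) by ring.
      apply derivable_pt_lim_mult; apply derivable_pt_lim_id.
  - subst. intros e He. exists (mkposreal e He). intros h Hh0 Hh. simpl in *.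
    rewrite Rabs_R0, Rplus_0_l, Rmult_0_l, Rminus_0_r, Rmult_0_r.
    replace (h * Rabs h / h - 0) with (Rabs h) by (field; auto).
    rewrite Rabs_Rabsolu. exact Hh.
  - apply (derivable_pt_lim_locally_ext (fun t => (t*t)) _ t 0 (t+1)).
    + lra.
    + intros z Hz. rewrite Rabs_right; lra.
    + rewrite Rabs_right by lra.
      replace (2*t) with (1*t + t*1) by ring.
      apply derivable_pt_lim_mult; apply derivable_pt_lim_id.
Qed.

Definition Pf (al x y : R) : R :=
  - (c_al al * x * y ^ 2) / 4 - (y - x) * Rabs (y - x) / 4 + y / (2 * c_al al).

Lemma Pf_deriv al x y : c_al al <> 0 -> is_derive (Pf al x) y (G al x y).
Proof.
  intros Hc. unfold Pf.
  assert (H1 : is_derive (fun y => - (c_al al * x * y ^ 2) / 4 + y / (2 * c_al al)) y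
             (- (c_al al * x * (2*y)) / 4 + 1 / (2 * c_al al))).
  { auto_derive; auto. field. auto. }
  assert (H2 : is_derive (fun y => (y - x) * Rabs (y - x)) y (2 * Rabs (y - x))).
  { assert (Hd : is_derive (fun y => y - x) y 1) by (auto_derive; auto; ring).
    assert (Hc1 := is_derive_comp (fun t => t * Rabs t) _ y _ _ (Q_deriv (y-x)) Hd).
    replace (2 * Rabs (y-x)) with (scal 1 (2*Rabs(y-x))).
    - exact Hc1.
    - unfold scal; simpl; unfold mult; simpl; ring. }
  assert (H3 := is_derive_minus _ _ y _ _ H1 (is_derive_scal _ y (1/4) _ H2)).
  replace (G al x y) with (minus (- (c_al al * x * (2 * y)) / 4 + 1 / (2 * c_al al)) (1/4 * (2 * Rabs (y - x)))).
  - eapply is_derive_ext; [|exact H3]. intro t; simpl; unfold minus, plus, opp; simpl; field; auto.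
  - unfold G, minus, plus, opp; simpl. rewrite (Rabs_minus_sym x y). field. auto.
Qed.

Lemma G_cont al x k y : continuous (fun y => G al x y * k) y.
Proof.
  apply continuity_pt_filterlim. unfold G.
  apply continuity_pt_mult; [|apply continuity_pt_const; intros ? ?; reflexivity].
  apply continuity_pt_plus; [|apply continuity_pt_const; intros ? ?; reflexivity].
  apply continuity_pt_minus.
  - apply continuity_pt_mult; [apply continuity_pt_const; intros ? ?; reflexivity|].
    apply derivable_continuous_pt, derivable_pt_id.
  - apply continuity_pt_mult; [apply continuity_pt_const; intros ? ?; reflexivity|].
    apply (continuity_pt_comp (fun y => x - y) Rabs).
    + apply continuity_pt_minus; [apply continuity_pt_const; intros ? ?; reflexivity|].
      apply derivable_continuous_pt, derivable_pt_id.
    + apply Rcontinuity_abs.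
Qed.

Lemma piece al x k u v : c_al al <> 0 ->
  is_RInt (fun y => G al x y * k) u v (k * (Pf al x v - Pf al x u)).
Proof.
  intros Hc.
  assert (H := is_RInt_derive (fun y => Pf al x y * k) (fun y => G al x y * k) u v).
  replace (k * (Pf al x v - Pf al x u)) with (minus (Pf al x v * k) (Pf al x u * k)).
  - apply H.
    + intros y _. 
      assert (H2 := is_derive_scal (Pf al x) y k _ (Pf_deriv al x y Hc)).
      simpl. rewrite (Rmult_comm (G al x y) k).
      eapply is_derive_ext; [|exact H2]. intro t; simpl; ring.
    + intros y _. apply G_cont.
  - unfold minus, plus, opp; simpl. ring.
Qed.

Definition Uf al delta a l x :=
  delta * (Pf al x PI - Pf al x (-PI)) + (Pf al x (a+l) - Pf al x (a-l)).

Lemma u_sol_eq al delta a l x : c_al al <> 0 -> -PI <= a - l -> 0 < l -> a + l <= PI ->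
  u_sol al (J delta a l) x = Uf al delta a l x.
Proof.
  intros Hc H1 Hl H3. unfold u_sol. apply is_RInt_unique.
  assert (A1 : is_RInt (fun y => G al x y * J delta a l y) (-PI) (a-l)
                 (delta * (Pf al x (a-l) - Pf al x (-PI)))).
  { eapply is_RInt_ext; [|apply piece; auto].
    intros y Hy. rewrite Rmin_left in Hy by lra. rewrite Rmax_right in Hy by lra.
    unfold J, chi_I. destruct (Rle_dec (a - l) y); [lra|]. f_equal; ring. }
  assert (A2 : is_RInt (fun y => G al x y * J delta a l y) (a-l) (a+l)
                 ((delta+1) * (Pf al x (a+l) - Pf al x (a-l)))).
  { eapply is_RInt_ext; [|apply piece; auto].
    intros y Hy. rewrite Rmin_left in Hy by lra. rewrite Rmax_right in Hy by lra.
    unfold J, chi_I. destruct (Rle_dec (a - l) y); [|lra].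
    destruct (Rle_dec y (a + l)); [|lra]. reflexivity. }
  assert (A3 : is_RInt (fun y => G al x y * J delta a l y) (a+l) PI
                 (delta * (Pf al x PI - Pf al x (a+l)))).
  { eapply is_RInt_ext; [|apply piece; auto].
    intros y Hy. rewrite Rmin_left in Hy by lra. rewrite Rmax_right in Hy by lra.
    unfold J, chi_I. destruct (Rle_dec (a - l) y); [|lra].
    destruct (Rle_dec y (a + l)); [lra|]. f_equal; ring. }
  assert (H := is_RInt_Chasles _ _ _ _ _ _ (is_RInt_Chasles _ _ _ _ _ _ A1 A2) A3).
  replace (Uf al delta a l x) with
    (plus (plus (delta * (Pf al x (a-l) - Pf al x (-PI)))
                ((delta+1) * (Pf al x (a+l) - Pf al x (a-l))))
          (delta * (Pf al x PI - Pf al x (a+l)))).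
  - exact H.
  - unfold Uf, plus; simpl. ring.
Qed.

Ltac rabs_elim :=
  repeat match goal with
  | |- context [Rabs ?t] =>
      first [ rewrite (Rabs_pos_eq t) by lra | rewrite (Rabs_left1 t) by lra ]
  end.

Definition pp al delta a l := PI * delta + l - c_al al * l * a.

Section V.
Variables (al delta a l x : R).
Hypotheses (Hc : c_al al <> 0) (Ha1 : -PI <= a - l) (Hl : 0 < l) (Ha2 : a + l <= PI)
  (Hx1 : -PI <= x) (Hx2 : x <= PI).

Lemma V1 : x <= a - l -> Uf al delta a l x - Uf al delta a l (-PI) =
  pp al delta a l * (x + PI) - delta * (x + PI) ^ 2 / 2.
Proof. intros. unfold Uf, Pf, pp. rabs_elim. field. auto. Qed.

Lemma V2 : a - l <= x <= a + l -> Uf al delta a l x - Uf al delta a l (-PI) =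
  pp al delta a l * (x + PI) - delta * (x + PI) ^ 2 / 2 - (x - a + l) ^ 2 / 2.
Proof. intros. unfold Uf, Pf, pp. rabs_elim. field. auto. Qed.

Lemma V3 : a + l <= x -> Uf al delta a l x - Uf al delta a l (-PI) =
  pp al delta a l * (x + PI) - delta * (x + PI) ^ 2 / 2 - 2 * l * (x - a).
Proof. intros. unfold Uf, Pf, pp. rabs_elim. field. auto. Qed.
End V.

Lemma umax_eq (u : R -> R) m xm : -PI <= xm <= PI -> u xm = m ->
  (forall x, -PI <= x <= PI -> u x <= m) -> umax u = m.
Proof.
  intros Hxm Hu Hb. unfold umax.
  rewrite (is_lub_Rbar_unique _ (Finite m)); [reflexivity|].
  split.
  - intros v [x [Hx ->]]. simpl. apply Hb; auto.
  - intros b Hub. apply Hub. exists xm. split; auto.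
Qed.

Lemma umin_eq (u : R -> R) m xm : -PI <= xm <= PI -> u xm = m ->
  (forall x, -PI <= x <= PI -> m <= u x) -> umin u = m.
Proof.
  intros Hxm Hu Hb. unfold umin.
  rewrite (is_glb_Rbar_unique _ (Finite m)); [reflexivity|].
  split.
  - intros v [x [Hx ->]]. simpl. apply Hb; auto.
  - intros b Hub. apply Hub. exists xm. split; auto.
Qed.

Lemma c_pos al : 0 < al -> 0 < c_al al.
Proof. intros. unfold c_al. assert (0 < PI) by apply PI_RGT_0.
  apply Rdiv_lt_0_compat; nra. Qed.

Lemma c_pi al : 0 < al -> c_al al * PI < 1.
Proof. intros. unfold c_al. assert (0 < PI) by apply PI_RGT_0.
  apply (Rmult_lt_reg_r (1 + al * PI)); [nra|].
  field_simplify; nra. Qed.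

Lemma c_inv al : 0 < al -> 1 - c_al al * PI = 1 / (1 + al * PI).
Proof. intros. unfold c_al. assert (0 < PI) by apply PI_RGT_0. field. nra. Qed.

Definition xA al delta a l := a * (1 - c_al al * l) / (1 + delta).
Definition fA al delta a l :=
  pp al delta a l * (xA al delta a l + PI) - delta * (xA al delta a l + PI) ^ 2 / 2
  - (xA al delta a l - a + l) ^ 2 / 2.
Definition xB al delta a l := l * (1 - c_al al * a) / delta.
Definition fB al delta a l := pp al delta a l ^ 2 / (2 * delta).
Definition regA al delta a l := a * (c_al al * l + delta) <= l * (1 + delta).
Definition fval al delta a l :=
  if Rle_dec (a * (c_al al * l + delta)) (l * (1 + delta)) then fA al delta a l
  else fB al delta a l.

Section Bounds.
Variables (al delta a l : R).
Hypotheses (Hal : 0 < al) (Hl : 0 < l) (HlP : l < PI) (Hd : 0 <= delta)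
  (Ha0 : 0 <= a) (Ha1 : a <= PI - l).

Let c := c_al al.
Let Hc : 0 < c := c_pos al Hal.
Let Hcp : c * PI < 1 := c_pi al Hal.
Let HP : 0 < PI := PI_RGT_0.

Lemma V_low x : -PI <= x <= PI -> 0 <= Uf al delta a l x - Uf al delta a l (-PI).
Proof.
  intros [Hx1 Hx2].
  assert (Hca : c * a < 1) by nra.
  assert (Hcla : 0 < l * (1 - c * a)) by nra.
  assert (Hcne : c_al al <> 0) by (fold c; lra).
  unfold pp; fold c.
  destruct (Rle_dec x (a - l)).
  - rewrite (V1 al delta a l x Hcne); try lra. unfold pp; fold c.
    assert (0 <= delta * (PI - x)) by nra.
    nra.
  - destruct (Rle_dec x (a + l)).
    + rewrite (V2 al delta a l x Hcne); try lra. unfold pp; fold c.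
      assert (0 <= delta * (PI - x) * (x + PI)) by (apply Rmult_le_pos; nra).
      assert ((x - a + l) ^ 2 / 2 <= l * (x - a + l)) by nra.
      assert (0 <= c * l * a) by (apply Rmult_le_pos; [apply Rmult_le_pos|]; lra).
      assert (c * l * a * (x + PI) <= 2 * l * a * (c * PI)) by nra.
      assert (l * a * (c * PI) <= l * a) by nra.
      nra.
    + rewrite (V3 al delta a l x Hcne); try lra. unfold pp; fold c.
      assert (0 <= delta * (PI - x) * (x + PI)) by (apply Rmult_le_pos; nra).
      assert (0 <= c * l * a) by (apply Rmult_le_pos; [apply Rmult_le_pos|]; lra).
      assert (c * l * a * (x + PI) <= 2 * l * a * (c * PI)) by nra.
      assert (l * a * (c * PI) <= l * a) by nra.
      nra.
Qed.
Lemma xA_bounds : regA al delta a l ->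
  a - l <= xA al delta a l <= a + l.
Proof.
  unfold regA, xA; fold c. intros H. split.
  - apply (Rmult_le_reg_r (1 + delta)); [lra|].
    unfold Rdiv. rewrite Rmult_assoc, Rinv_l by lra. nra.
  - apply (Rmult_le_reg_r (1 + delta)); [lra|].
    unfold Rdiv. rewrite Rmult_assoc, Rinv_l by lra.
    assert (0 <= a * (c * l)) by (apply Rmult_le_pos; nra). nra.
Qed.

Lemma regB_delta : ~ regA al delta a l -> 0 < delta.
Proof.
  unfold regA; fold c. intros H.
  destruct (Req_dec delta 0) as [->|]; [|lra].
  exfalso; apply H. assert (c * a <= 1) by nra. nra.
Qed.

Lemma xB_bounds : ~ regA al delta a l -> 0 <= xB al delta a l < a - l.
Proof.
  intros H. assert (Hd' := regB_delta H). unfold regA in H. apply Rnot_le_lt in H. fold c in H. unfold xB; fold c.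
  assert (Hca : c * a < 1) by nra.
  split.
  - apply Rmult_le_pos; [nra|]. apply Rlt_le, Rinv_0_lt_compat; lra.
  - apply (Rmult_lt_reg_r delta); [lra|].
    unfold Rdiv. rewrite Rmult_assoc, Rinv_l by lra. nra.
Qed.

Lemma V_att : exists xs, -PI <= xs <= PI /\
  Uf al delta a l xs - Uf al delta a l (-PI) = fval al delta a l.
Proof.
  assert (Hcne : c_al al <> 0) by (fold c; lra).
  unfold fval. destruct (Rle_dec _ _) as [H|H].
  - exists (xA al delta a l). assert (Hb := xA_bounds H). split; [lra|].
    rewrite (V2 al delta a l _ Hcne); try lra. reflexivity.
  - exists (xB al delta a l). assert (Hb := xB_bounds H). split; [lra|].
    assert (Hd' := regB_delta H).
    rewrite (V1 al delta a l _ Hcne); try lra. unfold fB, xB, pp. field. lra.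
Qed.

Lemma V_up x : -PI <= x <= PI ->
  Uf al delta a l x - Uf al delta a l (-PI) <= fval al delta a l.
Proof.
  intros [Hx1 Hx2].
  assert (Hcne : c_al al <> 0) by (fold c; lra).
  unfold fval. destruct (Rle_dec _ _) as [H|H].
  - assert (Hb := xA_bounds H).
    assert (Key : forall y, pp al delta a l * (y + PI) - delta * (y + PI) ^ 2 / 2 - (y - a + l) ^ 2 / 2
                 = fA al delta a l - (1 + delta) * (y - xA al delta a l) ^ 2 / 2).
    { intros y. unfold fA, xA, pp. field. lra. }
    set (xs := xA al delta a l) in *.
    destruct (Rle_dec x (a - l)).
    + rewrite (V1 al delta a l x Hcne); try lra.
      assert (E := Key x).
      assert ((x - a + l) ^ 2 <= (x - xs) ^ 2) by nra.
      assert (0 <= delta * (x - xs) ^ 2) by (apply Rmult_le_pos; [lra|apply pow2_ge_0]).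
      nra.
    + destruct (Rle_dec x (a + l)).
      * rewrite (V2 al delta a l x Hcne); try lra. rewrite Key.
        assert (0 <= (1 + delta) * (x - xs) ^ 2) by (apply Rmult_le_pos; [lra|apply pow2_ge_0]).
        lra.
      * rewrite (V3 al delta a l x Hcne); try lra.
        assert (E := Key x).
        assert ((x - a - l) ^ 2 <= (x - xs) ^ 2) by nra.
        assert (0 <= delta * (x - xs) ^ 2) by (apply Rmult_le_pos; [lra|apply pow2_ge_0]).
        nra.
  - assert (Hb := xB_bounds H). assert (Hd' := regB_delta H).
    assert (Key : forall y, pp al delta a l * (y + PI) - delta * (y + PI) ^ 2 / 2
                 = fB al delta a l - delta * (y - xB al delta a l) ^ 2 / 2).
    { intros y. unfold fB, xB, pp. field. lra. }
    assert (0 <= delta * (x - xB al delta a l) ^ 2) by (apply Rmult_le_pos; [lra|apply pow2_ge_0]).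
    destruct (Rle_dec x (a - l)).
    + rewrite (V1 al delta a l x Hcne); try lra. rewrite Key. lra.
    + destruct (Rle_dec x (a + l)).
      * rewrite (V2 al delta a l x Hcne); try lra. rewrite Key.
        assert (0 <= (x - a + l) ^ 2) by nra. lra.
      * rewrite (V3 al delta a l x Hcne); try lra. rewrite Key. nra.
Qed.

Lemma osc_val : oscJ al l delta a = fval al delta a l.
Proof.
  assert (Hcne : c_al al <> 0) by (fold c; lra).
  assert (Hu : forall x, u_sol al (J delta a l) x = Uf al delta a l x).
  { intros x. apply u_sol_eq; auto; lra. }
  destruct V_att as [xs [Hxs Hv]].
  unfold oscJ, osc.
  rewrite (umax_eq _ (Uf al delta a l (-PI) + fval al delta a l) xs Hxs).
  - rewrite (umin_eq _ (Uf al delta a l (-PI)) (-PI)).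
    + ring.
    + lra.
    + apply Hu.
    + intros x Hx. rewrite Hu. assert (H := V_low x Hx). lra.
  - rewrite Hu. lra.
  - intros x Hx. rewrite Hu. assert (H := V_up x Hx). lra.
Qed.
End Bounds.

Section Ana.
Variables (al delta l : R).
Hypotheses (Hal : 0 < al) (Hl : 0 < l) (HlP : l < PI) (Hd : 0 <= delta).

Let c := c_al al.
Let Hc : 0 < c := c_pos al Hal.
Let Hcp : c * PI < 1 := c_pi al Hal.
Let HP : 0 < PI := PI_RGT_0.

Definition KK := (delta + 2 * c * l - c ^ 2 * l ^ 2) / (1 + delta).
Definition F0 := PI * l + PI ^ 2 * delta / 2 - l ^ 2 / 2.
Definition a0' := l * (1 - c * PI) / KK.
Definition a1 := l * (1 + delta) / (c * l + delta).

Lemma cl_lt1 : 0 < c * l < 1.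
Proof. split; [nra|]. assert (c*l < c*PI) by (apply Rmult_lt_compat_l; lra). lra. Qed.

Lemma KK_num_pos : 0 < delta + 2 * c * l - c ^ 2 * l ^ 2.
Proof. assert (H := cl_lt1). nra. Qed.

Lemma KK_pos : 0 < KK.
Proof. unfold KK. apply Rdiv_lt_0_compat; [apply KK_num_pos|lra]. Qed.

Lemma fA_eq a : fA al delta a l = F0 + a * l * (1 - c * PI) - KK * a ^ 2 / 2.
Proof. unfold fA, xA, pp, F0, KK. fold c. field. lra. Qed.

Lemma fA_diff a b : fA al delta b l - fA al delta a l = KK * (b - a) * (a0' - (a + b) / 2).
Proof. rewrite !fA_eq. unfold a0'. assert (H := KK_pos). field. lra. Qed.

Lemma a0'_pos : 0 < a0'.
Proof. unfold a0'. assert (H := KK_pos). apply Rdiv_lt_0_compat; nra. Qed.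

Lemma a0'_lt_a1 : a0' < a1.
Proof.
  unfold a0', a1, KK. assert (H1 := cl_lt1).
  assert (Hk := KK_num_pos).
  assert (Hcl : 0 < c * l + delta) by nra.
  replace (l * (1 - c * PI) / ((delta + 2 * c * l - c ^ 2 * l ^ 2) / (1 + delta)))
    with (l * (1 - c * PI) * (1 + delta) / (delta + 2 * c * l - c ^ 2 * l ^ 2)) by (field; lra).
  apply (Rmult_lt_reg_r ((delta + 2 * c * l - c ^ 2 * l ^ 2) * (c * l + delta))); [nra|].
  field_simplify; try lra.
  match goal with |- ?L < ?R => assert (E : R - L = l * (1 + delta) * (l * c * (1 - l * c + c * PI) + c * PI * delta)) by ring end.
  assert (0 < l * c * (1 - l * c + c * PI)) by (apply Rmult_lt_0_compat; nra).
  assert (0 <= c * PI * delta) by (apply Rmult_le_pos; [apply Rmult_le_pos|]; lra).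
  assert (0 < l * (1 + delta) * (l * c * (1 - l * c + c * PI) + c * PI * delta)) by (apply Rmult_lt_0_compat; nra).
  lra.
Qed.

Lemma regA_iff a : regA al delta a l <-> a <= a1.
Proof.
  unfold regA, a1. fold c. assert (Hcl : 0 < c * l + delta) by nra.
  split; intro H.
  - apply (Rmult_le_reg_r (c * l + delta)); [lra|]. unfold Rdiv.
    rewrite Rmult_assoc, Rinv_l by lra. lra.
  - apply (Rmult_le_compat_r (c * l + delta)) in H; [|lra].
    unfold Rdiv in H. rewrite Rmult_assoc, Rinv_l in H by lra. lra.
Qed.

Lemma fB_a1 : 0 < delta -> fB al delta a1 l = fA al delta a1 l.
Proof.
  intros Hd'. assert (Hcl : 0 < c * l + delta) by nra.
  unfold fB, fA, xA, pp, a1. fold c. field. lra.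
Qed.

Lemma fB_decr a b : 0 < delta -> a < b -> c * b < 1 -> fB al delta b l < fB al delta a l.
Proof.
  intros Hd' Hab Hcb. unfold fB, pp. fold c.
  assert (0 < PI * delta + l - c * l * b) by nra.
  assert (PI * delta + l - c * l * b < PI * delta + l - c * l * a) by (assert (0 < c * l * (b - a)) by (apply Rmult_lt_0_compat; [apply Rmult_lt_0_compat|]; lra); lra).
  unfold Rdiv. apply Rmult_lt_compat_r. apply Rinv_0_lt_compat; lra. nra.
Qed.
End Ana.

Lemma fval_A al delta a l : regA al delta a l -> fval al delta a l = fA al delta a l.
Proof. unfold fval, regA. intros H. destruct (Rle_dec _ _); tauto. Qed.
Lemma fval_B al delta a l : ~ regA al delta a l -> fval al delta a l = fB al delta a l.
Proof. unfold fval, regA. intros H. destruct (Rle_dec _ _); tauto. Qed.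

Section Ana2.
Variables (al delta l : R).
Hypotheses (Hal : 0 < al) (Hl : 0 < l) (HlP : l < PI) (Hd : 0 <= delta).

Let c := c_al al.
Let Hc : 0 < c := c_pos al Hal.
Let Hcp : c * PI < 1 := c_pi al Hal.
Let HP : 0 < PI := PI_RGT_0.
Let HK : 0 < KK al delta l := KK_pos al delta l Hal Hl HlP Hd.
Let H01 : a0' al delta l < a1 al delta l := a0'_lt_a1 al delta l Hal Hl HlP Hd.
Let Hdiff := fA_diff al delta l Hal Hl HlP Hd.
Let H0pos := a0'_pos al delta l Hal Hl HlP Hd.

Lemma cb_lt b : b <= PI - l -> c * b < 1.
Proof. intros. assert (c * b <= c * PI) by (apply Rmult_le_compat_l; lra). lra. Qed.

Lemma incr a b : 0 <= a -> a < b -> b <= a0' al delta l -> b <= PI - l ->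
  fval al delta a l < fval al delta b l.
Proof.
  intros Ha Hab Hb Hb2.
  rewrite !fval_A by (apply (regA_iff al delta l Hal Hl Hd); lra).
  assert (H := Hdiff a b).
  assert (0 < KK al delta l * (b - a)) by (apply Rmult_lt_0_compat; lra).
  assert (0 < KK al delta l * (b - a) * (a0' al delta l - (a + b) / 2)) by (apply Rmult_lt_0_compat; lra).
  lra.
Qed.

Lemma decr a b : a0' al delta l <= a -> a < b -> b <= PI - l ->
  fval al delta b l < fval al delta a l.
Proof.
  intros Ha Hab Hb2.
  assert (Hri := regA_iff al delta l Hal Hl Hd).
  destruct (Rle_dec b (a1 al delta l)) as [Hb1|Hb1].
  - rewrite !fval_A by (apply Hri; lra).
    assert (H := Hdiff a b).
    assert (0 < KK al delta l * (b - a)) by (apply Rmult_lt_0_compat; lra).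
    assert (0 < KK al delta l * (b - a) * ((a + b) / 2 - a0' al delta l)) by (apply Rmult_lt_0_compat; lra).
    lra.
  - assert (HnB : ~ regA al delta b l) by (rewrite Hri; exact Hb1).
    assert (Hd' := regB_delta al delta b l Hal Hl HlP Hd ltac:(lra) Hb2 HnB).
    rewrite (fval_B al delta b l HnB).
    destruct (Rle_dec a (a1 al delta l)) as [Ha1|Ha1].
    + rewrite fval_A by (apply Hri; lra).
      assert (H1 := fB_decr al delta l Hal Hl (a1 al delta l) b Hd' ltac:(lra) (cb_lt b Hb2)).
      rewrite fB_a1 in H1 by auto.
      assert (H := Hdiff a (a1 al delta l)).
      assert (0 <= KK al delta l * (a1 al delta l - a)) by (apply Rmult_le_pos; lra).
      assert (0 <= KK al delta l * (a1 al delta l - a) * ((a + a1 al delta l) / 2 - a0' al delta l)) by (apply Rmult_le_pos; lra).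
      lra.
    + rewrite fval_B by (rewrite Hri; exact Ha1).
      apply fB_decr; auto. apply cb_lt; auto.
Qed.

Lemma fmax a : 0 <= a <= PI - l -> fval al delta a l <= fA al delta (a0' al delta l) l.
Proof.
  intros [Ha0 Ha1].
  assert (Hri := regA_iff al delta l Hal Hl Hd).
  assert (Ha1' : fA al delta (a1 al delta l) l <= fA al delta (a0' al delta l) l).
  { assert (H := Hdiff (a1 al delta l) (a0' al delta l)).
    assert (H2 : KK al delta l * (a0' al delta l - a1 al delta l) * (a0' al delta l - (a1 al delta l + a0' al delta l) / 2)
            = KK al delta l * ((a0' al delta l - a1 al delta l) ^ 2 / 2)) by field.
    assert (0 <= KK al delta l * ((a0' al delta l - a1 al delta l) ^ 2 / 2)).
    { apply Rmult_le_pos; [lra|]. assert (0 <= (a0' al delta l - a1 al delta l) ^ 2) by apply pow2_ge_0. lra. }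
    lra. }
  destruct (Rle_dec a (a1 al delta l)) as [Hb|Hb].
  - rewrite fval_A by (apply Hri; lra).
    assert (H := Hdiff a (a0' al delta l)).
    assert (H2 : KK al delta l * (a0' al delta l - a) * (a0' al delta l - (a + a0' al delta l) / 2)
            = KK al delta l * ((a0' al delta l - a) ^ 2 / 2)) by field.
    assert (0 <= KK al delta l * ((a0' al delta l - a) ^ 2 / 2)).
    { apply Rmult_le_pos; [lra|]. assert (0 <= (a0' al delta l - a) ^ 2) by apply pow2_ge_0. lra. }
    lra.
  - assert (HnB : ~ regA al delta a l) by (rewrite Hri; exact Hb).
    assert (Hd' := regB_delta al delta a l Hal Hl HlP Hd Ha0 Ha1 HnB).
    rewrite (fval_B al delta a l HnB).
    assert (H1 := fB_decr al delta l Hal Hl (a1 al delta l) a Hd' ltac:(lra) (cb_lt a Ha1)).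
    rewrite fB_a1 in H1 by auto. lra.
Qed.

Lemma fmax2 a : PI - l <= a0' al delta l -> 0 <= a <= PI - l ->
  fval al delta a l <= fA al delta (PI - l) l.
Proof.
  intros Hp [Ha0 Ha1].
  rewrite fval_A by (apply (regA_iff al delta l Hal Hl Hd); lra).
  assert (H := Hdiff a (PI - l)).
  assert (0 <= KK al delta l * (PI - l - a)) by (apply Rmult_le_pos; lra).
  assert (0 <= KK al delta l * (PI - l - a) * (a0' al delta l - (a + (PI - l)) / 2)) by (apply Rmult_le_pos; lra).
  lra.
Qed.
End Ana2.

Ltac nz := repeat split; try match goal with |- ?x <> 0 => apply Rgt_not_eq; first [lra | nra] end.

Section Fin.
Variables (al delta l : R).
Hypotheses (Hal : 0 < al) (Hl : 0 < l) (HlP : l < PI) (Hd : 0 <= delta).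
Let HP : 0 < PI := PI_RGT_0.
Let Hc : 0 < c_al al := c_pos al Hal.
Let Hkn : 0 < delta + 2 * c_al al * l - c_al al ^ 2 * l ^ 2 := KK_num_pos al delta l Hal Hl HlP Hd.

Definition Dd := (PI ^ 2 * delta + 2 * PI * l - l ^ 2) * al ^ 2 + 2 * (PI * delta + l) * al + delta.

Lemma Dd_eq : Dd = (1 + al * PI) ^ 2 * (delta + 2 * c_al al * l - c_al al ^ 2 * l ^ 2).
Proof. unfold Dd, c_al. field. nra. Qed.

Lemma Dd_pos : 0 < Dd.
Proof. rewrite Dd_eq. apply Rmult_lt_0_compat; [|lra]. assert (0 < 1 + al * PI) by nra. nra. Qed.

Lemma a0_eq : a0 al l delta = a0' al delta l.
Proof.
  unfold a0, a0', KK. rewrite (c_inv al Hal). field. nz.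
Qed.

Lemma Th1_eq : fA al delta (a0' al delta l) l =
    (1/2) * ((1 + delta) * l ^ 2 /
      ((PI ^ 2 * delta + 2 * PI * l - l ^ 2) * al ^ 2
       + 2 * (PI * delta + l) * al + delta))
    + PI * l + PI ^ 2 * delta / 2 - l ^ 2 / 2.
Proof.
  fold Dd. rewrite Dd_eq. rewrite fA_eq by auto. unfold a0', KK, F0.
  rewrite (c_inv al Hal). field; nz.
Qed.

Lemma Th2_eq : fA al delta (PI - l) l =
    (1/2) * ((l ^ 2 * (c_al al) ^ 2 - 2 * l * c_al al - delta) * (PI - l) ^ 2
             / (1 + delta))
    + l * (PI - l) / (1 + al * PI)
    + PI * l + PI ^ 2 * delta / 2 - l ^ 2 / 2.
Proof.
  rewrite fA_eq by auto. unfold KK, F0.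
  rewrite (c_inv al Hal). field; nz.
Qed.

Definition Qd := qA l delta * al ^ 2 + qB l delta * al + qC l delta.

Lemma a0_Qd : (PI - l) - a0' al delta l = (PI - l) * Qd / Dd.
Proof.
  assert (HD := Dd_pos). unfold Qd. 
  assert (E : qA l delta * al ^ 2 + qB l delta * al + qC l delta
              = Dd - l * (1 + delta) * (1 + al * PI) / (PI - l)).
  { unfold qA, qB, qC, Dd. field. lra. }
  rewrite E. unfold a0', KK. rewrite (c_inv al Hal).
  replace (l * (1 / (1 + al * PI)) / ((delta + 2 * c_al al * l - c_al al ^ 2 * l ^ 2) / (1 + delta)))
    with (l * (1 + delta) * (1 + al * PI) / Dd).
  - field. split; lra.
  - rewrite Dd_eq. field; nz.
Qed.

Lemma Qd_iff : (alpha_g l delta < al -> 0 < Qd) /\ (al <= alpha_g l delta -> Qd <= 0).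
Proof.
  assert (HqA : 0 < qA l delta) by (unfold qA; nra).
  unfold alpha_g. destruct (Rlt_dec _ _) as [Hlt|Hge].
  - assert (HqC : qC l delta < 0).
    { unfold qC. apply (Rmult_lt_reg_r (PI - l)); [lra|].
      unfold Rdiv. rewrite Rmult_0_l, Rmult_minus_distr_r, Rmult_assoc, Rinv_l by lra. lra. }
    set (Dis := qB l delta ^ 2 - 4 * qA l delta * qC l delta).
    assert (HDis : qB l delta ^ 2 < Dis) by (unfold Dis; nra).
    assert (Hs0 := sqrt_pos Dis).
    assert (Hs2 : sqrt Dis * sqrt Dis = Dis) by (apply sqrt_sqrt; nra).
    set (s := sqrt Dis) in *.
    assert (Hsb1 : qB l delta < s) by nra.
    assert (Hsb2 : - qB l delta < s) by nra.
    set (r := (- qB l delta + s) / (2 * qA l delta)).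
    set (r' := (- qB l delta - s) / (2 * qA l delta)).
    assert (Hr' : r' < 0).
    { assert (Hr'e : r' * (2 * qA l delta) = - qB l delta - s) by (unfold r'; field; lra). nra. }
    assert (EQ : Qd = qA l delta * (al - r) * (al - r')).
    { unfold Qd, r, r'. field_simplify; [|lra]. 
      replace (s ^ 2) with Dis by (simpl; nra). unfold Dis. field. lra. }
    split; intro H; rewrite EQ.
    + apply Rmult_lt_0_compat; [apply Rmult_lt_0_compat|]; lra.
    + assert (0 <= qA l delta * (r - al) * (al - r')) by (apply Rmult_le_pos; [apply Rmult_le_pos|]; lra).
      nra.
  - split; intro H; [|lra].
    apply Rnot_lt_le in Hge.
    assert (HqC : 0 <= qC l delta).
    { unfold qC. apply (Rmult_le_reg_r (PI - l)); [lra|].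
      unfold Rdiv. rewrite Rmult_0_l, Rmult_minus_distr_r, Rmult_assoc, Rinv_l by lra. lra. }
    assert (HqB : 0 < qB l delta).
    { unfold qB. apply Rdiv_lt_0_compat; [|lra]. nra. }
    unfold Qd. assert (0 < qA l delta * al ^ 2) by (apply Rmult_lt_0_compat; nra).
    assert (0 < qB l delta * al) by nra. lra.
Qed.

Lemma ag_a0 : (alpha_g l delta < al -> a0' al delta l < PI - l) /\
              (al <= alpha_g l delta -> PI - l <= a0' al delta l).
Proof.
  assert (E := a0_Qd). assert (HD := Dd_pos). destruct Qd_iff as [H1 H2].
  split; intro H.
  - specialize (H1 H). assert (0 < (PI - l) * Qd / Dd).
    { apply Rdiv_lt_0_compat; [apply Rmult_lt_0_compat|]; lra. } lra.
  - specialize (H2 H). assert ((PI - l) * Qd / Dd <= 0).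
    { unfold Rdiv. assert (0 < / Dd) by (apply Rinv_0_lt_compat; lra).
      assert ((PI - l) * Qd <= 0) by nra. nra. } lra.
Qed.
End Fin.

Theorem lemma3 (l al delta : R) :
  0 < l < PI -> 0 < al -> 0 <= delta ->
  ((forall a, 0 <= a <= PI - l -> oscJ al l delta a <= Theta al l delta) /\
   (exists a, 0 <= a <= PI - l /\ oscJ al l delta a = Theta al l delta)) /\
  (alpha_g l delta < al ->
     (forall a b, 0 <= a -> a < b -> b <= a0 al l delta -> b <= PI - l ->
        oscJ al l delta a < oscJ al l delta b) /\
     (forall a b, a0 al l delta <= a -> a < b -> b <= PI - l ->
        oscJ al l delta b < oscJ al l delta a)) /\
  (al <= alpha_g l delta ->
     forall a b, 0 <= a -> a < b -> b <= PI - l ->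
        oscJ al l delta a < oscJ al l delta b).
Proof.
  intros [Hl HlP] Hal Hd.
  assert (Hosc : forall a, 0 <= a <= PI - l -> oscJ al l delta a = fval al delta a l).
  { intros a [Ha0 Ha1]. apply osc_val; auto. }
  assert (Ha0 := a0_eq al delta l Hal Hl HlP Hd).
  destruct (ag_a0 al delta l Hal Hl HlP Hd) as [G1 G2].
  assert (Hpos := a0'_pos al delta l Hal Hl HlP Hd).
  assert (H01 := a0'_lt_a1 al delta l Hal Hl HlP Hd).
  assert (Hri := regA_iff al delta l Hal Hl Hd).
  rewrite Ha0.
  split; [|split].
  - unfold Theta. destruct (Rlt_dec _ _) as [Hlt|Hge].
    + rewrite <- (Th1_eq al delta l Hal Hl HlP Hd).
      specialize (G1 Hlt). split.
      * intros a Ha. rewrite Hosc by auto. apply fmax; auto.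
      * exists (a0' al delta l). split; [lra|].
        rewrite Hosc by lra. apply fval_A. apply Hri. lra.
    + apply Rnot_lt_le in Hge.
      rewrite <- (Th2_eq al delta l Hal); auto.
      specialize (G2 Hge). split.
      * intros a Ha. rewrite Hosc by auto. apply fmax2; auto.
      * exists (PI - l). split; [lra|].
        rewrite Hosc by lra. apply fval_A. apply Hri. lra.
  - intros Hlt. split.
    + intros a b Ha Hab Hb Hb2. rewrite !Hosc by lra. apply incr; auto.
    + intros a b Ha Hab Hb2. rewrite !Hosc by lra. apply decr; auto.
  - intros Hge a b Ha Hab Hb2. specialize (G2 Hge).
    rewrite !Hosc by lra. apply incr; auto. lra.
Qed.
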